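(* Let $p_1,p_2>2$ be distinct primes and $m_2=p_1^{\beta_1}p_2^{\beta_2}$ with $\beta_1,\beta_2$ positive integers. Let $t=\mathrm{ord}_{m_2}(2)$ and let $\gamma\in\mathbb{F}_{2^t}^*$ be a primitive $m_2$th root of unity. Suppose that $m_2$ is good and that $(u,v)=(p_1^{i_1}p_2^{i_2}\sigma_1,\ p_1^{j_1}p_2^{j_2}\sigma_2)$ is a collision for $m_2$, where $i_1,i_2,j_1,j_2$ are nonnegative integers and $\sigma_1,\sigma_2$ are integers coprime to $m_2$. Let $\omega_1=\min\{i_1,j_1\}$ and $\omega_2=\min\{i_2,j_2\}$. Then $m_1:=m_2/(p_1^{\omega_1}p_2^{\omega_2})$ is good.
   Context: For $m=p_1^{\alpha_1}p_2^{\alpha_2}$ with $p_1,p_2>2$ distinct primes and $\alpha_1,\alpha_2\ge1$: $\mathrm{ord}_m(2)$ is the multiplicative order of $2$ modulo $m$, and with $t=\mathrm{ord}_m(2)$ one fixes a primitive $m$th root of unity $\gamma\in\mathbb{F}_{2^t}^*$. The canonical set of $m$ is $S_m=\{s_{01},s_{10},s_{11}\}\subseteq\mathbb{Z}_m$, where for $\sigma=(\sigma_1,\sigma_2)\in\{0,1\}^2\setminus\{(0,0)\}$, $s_\sigma$ is the unique element of $\mathbb{Z}_m$ with $s_\sigma\equiv\sigma_1 \pmod{p_1^{\alpha_1}}$ and $s_\sigma\equiv \sigma_2\pmod{p_2^{\alpha_2}}$. An $S_m$-decoding polynomial is a polynomial $P(X)\in\mathbb{F}_{2^t}[X]$ such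 that $P(\gamma^s)=0$ for every $s\in S_m$ and $P(1)=1$. The number $m$ is called good if there exists an $S_m$-decoding polynomial with fewer than $4$ monomials (nonzero terms). Let $E=\{e\in\mathbb{Z}: p_1^{\alpha_1}\nmid e,\ p_2^{\alpha_2}\nmid e\}$ and $\rho(z_1,z_2)=(1+z_2^{-1})(1+z_1^{-1})^{-1}$. A pair $(u,v)\in E^2$ is a collision for $m$ if $\rho(\gamma^{s_{10}u},\gamma^{s_{01}u})=\rho(\gamma^{s_{10}v},\gamma^{s_{01}v})$ and $u\not\equiv v\pmod m$. *)

(* Defs.v *)
From HB Require Import structures.
From mathcomp Require Import all_boot all_order all_algebra all_field.
Set Implicit Arguments. Unset Strict Implicit. Unset Printing Implicit Defensive.
Import Order.TTheory GRing.Theory Num.Theory.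
Local Open Scope ring_scope.

Definition is_ord2 (m t : nat) : Prop :=
  [/\ (0 < t)%N, (2 ^ t %% m = 1 %% m)%N &
      forall k : nat, (0 < k)%N -> (2 ^ k %% m = 1 %% m)%N -> (t <= k)%N].

Definition q1 (p1 m : nat) : nat := (p1 ^ logn p1 m)%N.
Definition q2 (p2 m : nat) : nat := (p2 ^ logn p2 m)%N.

Definition s_sig (p1 p2 m : nat) (sig1 sig2 : nat) : nat :=
  chinese (q1 p1 m) (q2 p2 m) sig1 sig2.
Definition s01 p1 p2 m := s_sig p1 p2 m 0 1.
Definition s10 p1 p2 m := s_sig p1 p2 m 1 0.
Definition s11 p1 p2 m := s_sig p1 p2 m 1 1.

Definition nmonomials (F : fieldType) (P : {poly F}) : nat :=
  count (fun c => c != 0) P.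

Definition decoding_poly (F : fieldType) (gamma : F) (p1 p2 m : nat)
    (P : {poly F}) : Prop :=
  [/\ P.[gamma ^+ s01 p1 p2 m] = 0, P.[gamma ^+ s10 p1 p2 m] = 0,
      P.[gamma ^+ s11 p1 p2 m] = 0 & P.[1] = 1].

Definition good_wrt (F : fieldType) (gamma : F) (p1 p2 m : nat) : Prop :=
  exists P : {poly F}, decoding_poly gamma p1 p2 m P /\ (nmonomials P < 4)%N.

(* m is good: in F_{2^t}, t = ord_m(2), with a primitive m-th root gamma.
   (Any finite field of order 2^t is F_{2^t}.) *)
Definition good (p1 p2 m : nat) : Prop :=
  forall (t : nat), is_ord2 m t ->
  forall (F : finFieldType), #|F| = (2 ^ t)%N ->
  forall gamma : F, m.-primitive_root gamma -> good_wrt gamma p1 p2 m.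

Definition inE_set (p1 p2 m : nat) (e : int) : bool :=
  ~~ ((q1 p1 m)%:Z %| e)%Z && ~~ ((q2 p2 m)%:Z %| e)%Z.

Definition rho (F : fieldType) (z1 z2 : F) : F :=
  (1 + z2^-1) * (1 + z1^-1)^-1.

Definition collision (F : fieldType) (gamma : F) (p1 p2 m : nat) (u v : int)
  : Prop :=
  [/\ inE_set p1 p2 m u, inE_set p1 p2 m v,
      rho (gamma ^ ((s10 p1 p2 m)%:Z * u)) (gamma ^ ((s01 p1 p2 m)%:Z * u))
      = rho (gamma ^ ((s10 p1 p2 m)%:Z * v)) (gamma ^ ((s01 p1 p2 m)%:Z * v))
    & (u != v %[mod (m%:Z)])%Z].

(* Main.v *)
Require Import Defs.
From HB Require Import structures.
From mathcomp Require Import all_boot all_order all_algebra all_field.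
From mathcomp Require Import ring zify.
From Stdlib Require Import Classical.
Set Implicit Arguments. Unset Strict Implicit. Unset Printing Implicit Defensive.
Import Order.TTheory GRing.Theory Num.Theory.
Local Open Scope ring_scope.

Definition f2 (K : fieldType) (h : (2%N \in [pchar K])) : {rmorphism 'F_2 -> K} :=
  (in_alg (pPrimeCharType h) : {rmorphism 'F_2 -> pPrimeCharType h}).
Definition ev (K : fieldType) (h : (2%N \in [pchar K])) (R : {poly 'F_2}) (x : K) : K :=
  (map_poly (f2 h) R).[x].
Section S.
Variables (K : fieldType) (h : (2%N \in [pchar K])).
Lemma evM p q x : ev h (p * q) x = ev h p x * ev h q x.
Proof. by rewrite /ev rmorphM hornerM. Qed.
Lemma evD p q x : ev h (p + q) x = ev h p x + ev h q x.
Proof. by rewrite /ev rmorphD hornerD. Qed.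
Lemma evB p q x : ev h (p - q) x = ev h p x - ev h q x.
Proof. by rewrite /ev rmorphB hornerD hornerN. Qed.
Lemma evXn n x : ev h ('X^n) x = x ^+ n.
Proof. by rewrite /ev map_polyXn hornerXn. Qed.
Lemma ev1 x : ev h 1 x = 1.
Proof. by rewrite /ev rmorph1 hornerC. Qed.
Lemma evX n p x : ev h (p ^+ n) x = (ev h p x) ^+ n.
Proof. by rewrite /ev rmorphXn horner_exp. Qed.
Lemma mapXn1 n : map_poly (f2 h) ('X^n - 1) = 'X^n - 1.
Proof. by rewrite rmorphB rmorph1; congr (_ - _); exact: map_polyXn. Qed.
End S.

Lemma min_ex (P : {poly 'F_2} -> Prop) :
  (exists R, P R) -> exists g, P g /\ forall R, P R -> (size g <= size R)%N.
Proof.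
move=> [R PR].
move: {2}(size R) (leqnn (size R)) => n.
elim: n R PR => [|n IH] R PR Hs.
  by exists R; split => // R' _; rewrite (leq_trans Hs).
case: (classic (exists R', P R' /\ (size R' < size R)%N)) => [[R' [PR' Hs']]|nex].
  by apply: (IH R') => //; rewrite -ltnS (leq_trans Hs').
exists R; split => // R' PR'; rewrite leqNgt; apply/negP => Hlt.
by apply: nex; exists R'.
Qed.

Lemma transfer (K K' : fieldType) (h : (2%N \in [pchar K])) (h' : (2%N \in [pchar K']))
  (e : K) (d : K') (m : nat) :
  e ^+ m = 1 -> m.-primitive_root d ->
  exists y : K', forall R, ev h R e = 0 -> ev h' R y = 0.
Proof.
move=> em pd.
have m0 : (0 < m)%N by apply: prim_order_gt0 pd.
have ex0 : exists R : {poly 'F_2}, R != 0 /\ ev h R e = 0.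
  exists ('X^m - 1); split; first exact: (monic_neq0 (monicXnsubC 1 m0)).
  by rewrite evB evXn ev1 em subrr.
have [g [[g0 ge] gmin]] := min_ex ex0.
have kerg : forall R, ev h R e = 0 -> R %% g = 0.
  move=> R Re; apply/eqP; apply: contraT => r0.
  have := gmin (R %% g); rewrite r0 leqNgt ltn_modpN0 //= => H; apply: H; split => //.
  by move: Re; rewrite {1}(divp_eq R g) evD evM ge mulr0 add0r.
have sg : (1 < size g)%N.
  rewrite ltnNge; apply/negP => /size1_polyC gE.
  move: ge g0; rewrite gE /ev map_polyC hornerC => /eqP.
  by rewrite fmorph_eq0 polyC_eq0 => ->.
have : map_poly (f2 h') g %| \prod_(0 <= i < m) ('X - (d ^+ i)%:P).
  rewrite (factor_Xn_sub_1 pd).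
  rewrite -(mapXn1 h').
  rewrite dvdp_map; apply/modp_eq0P; apply: kerg.
  by rewrite evB evXn ev1 em subrr.
move/dvdp_prod_XsubC => [ms Hms].
have : (size (map_poly (f2 h') g) > 1)%N by rewrite size_map_poly.
rewrite (eqp_size Hms).
case Es: (mask ms (index_iota 0 m)) => [|i0 s].
  by rewrite big_nil size_poly1.
move=> _; exists (d ^+ i0) => R Re.
rewrite (divp_eq R g) (kerg R Re) addr0 evM.
have -> : ev h' g (d ^+ i0) = 0.
  apply/eqP; rewrite /ev -/(root _ _) (eqp_root Hms) Es big_cons rootM.
  by rewrite root_XsubC eqxx.
by rewrite mulr0.
Qed.

Lemma nmon3 (K : fieldType) (c0 c1 c2 : K) i j :
  (nmonomials (c0%:P + c1 *: 'X^i + c2 *: 'X^j) <= 3)%N.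
Proof.
set p := _ + _ + _; rewrite /nmonomials.
have E : (p : seq K) = map (fun k => p`_k) (iota 0 (size p)).
  by rewrite -[LHS](mkseq_nth 0).
rewrite E count_map -size_filter.
have -> : 3%N = size [:: 0%N; i; j] by [].
apply: uniq_leq_size; first by rewrite filter_uniq // iota_uniq.
move=> k; rewrite mem_filter /= => /andP [nz _].
move: nz; rewrite /p !coefD coefC !coefZ !coefXn !inE.
by case: (k == 0)%N; case: (k == i); case: (k == j); rewrite ?mulr0 ?addr0 ?eqxx.
Qed.

Lemma crt_exp q1 q2 fa fb : coprime q1 q2 -> (q2 %| fa)%N -> (q1 %| fb)%N ->
  (chinese q1 q2 1 0 * (fa + fb) = fa %[mod q1 * q2])%N /\
  (chinese q1 q2 0 1 * (fa + fb) = fb %[mod q1 * q2])%N.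
Proof.
move=> cq Ha Hb; move: (Ha) (Hb); rewrite /dvdn => /eqP Ha' /eqP Hb'.
split; apply/eqP; rewrite chinese_remainder //; apply/andP; split; apply/eqP.
- by rewrite -modnMml chinese_modl // modnMml mul1n -modnDmr Hb' addn0.
- by rewrite -modnMml chinese_modr // mod0n mul0n mod0n Ha'.
- by rewrite -modnMml chinese_modl // mod0n mul0n mod0n Hb'.
- by rewrite -modnMml chinese_modr // modnMml mul1n -modnDml Ha' add0n.
Qed.

Lemma chinese11 q1 q2 : chinese q1 q2 1 1 = (chinese q1 q2 1 0 + chinese q1 q2 0 1)%N.
Proof. by rewrite /chinese !mul0n add0n addn0. Qed.

Lemma construct (K : fieldType) (h : (2%N \in [pchar K])) (dl : K) (q1 q2 : nat) (a b c d : K) :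
  (0 < q1)%N -> (0 < q2)%N -> coprime q1 q2 -> (q1 * q2).-primitive_root dl ->
  a ^+ q1 = 1 -> c ^+ q1 = 1 -> b ^+ q2 = 1 -> d ^+ q2 = 1 ->
  a != 1 -> b != 1 -> c != 1 -> a != c ->
  (1 + b) * (1 + c) = (1 + d) * (1 + a) ->
  exists P : {poly K}, [/\ P.[dl ^+ chinese q1 q2 0 1] = 0, P.[dl ^+ chinese q1 q2 1 0] = 0,
     P.[dl ^+ chinese q1 q2 1 1] = 0 & P.[1] = 1] /\ (nmonomials P < 4)%N.
Proof.
move=> q10 q20 cq pd Ha Hc Hb Hd a1 b1 c1 ac rel.
set m := (q1 * q2)%N.
have root1 : forall (x : K) n, x ^+ n = 1 -> (n %| m)%N -> x^-1 ^+ m = 1.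
  move=> x n Hx /dvdnP [k Ek]; rewrite exprVn Ek mulnC exprM Hx expr1n invr1 //.
have [fa Efa] := prim_rootP pd (root1 a q1 Ha (dvdn_mulr _ (dvdnn _))).
have [fc Efc] := prim_rootP pd (root1 c q1 Hc (dvdn_mulr _ (dvdnn _))).
have [fb Efb] := prim_rootP pd (root1 b q2 Hb (dvdn_mull _ (dvdnn _))).
have [fd Efd] := prim_rootP pd (root1 d q2 Hd (dvdn_mull _ (dvdnn _))).
have dv1 : forall (x : K) f, x ^+ q1 = 1 -> x^-1 = dl ^+ f -> (q2 %| f)%N.
  move=> x f Hx Ef; rewrite -(dvdn_pmul2l q10) [(q1 * f)%N]mulnC (prim_order_dvd pd).
  by rewrite exprM -Ef exprVn Hx invr1.
have dv2 : forall (x : K) f, x ^+ q2 = 1 -> x^-1 = dl ^+ f -> (q1 %| f)%N.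
  move=> x f Hx Ef; rewrite -(dvdn_pmul2r q20) (prim_order_dvd pd).
  by rewrite exprM -Ef exprVn Hx invr1.
have [EF1 EF2] := crt_exp cq (dv1 _ _ Ha Efa) (dv2 _ _ Hb Efb).
have [EG1 EG2] := crt_exp cq (dv1 _ _ Hc Efc) (dv2 _ _ Hd Efd).
set e1 := chinese q1 q2 1 0; set e2 := chinese q1 q2 0 1.
set F := (fa + fb)%N; set G := (fc + fd)%N.
have x1F : (dl ^+ e1) ^+ F = a^-1 by rewrite -exprM Efa; apply/eqP; rewrite (eq_prim_root_expr pd) EF1.
have x2F : (dl ^+ e2) ^+ F = b^-1 by rewrite -exprM Efb; apply/eqP; rewrite (eq_prim_root_expr pd) EF2.
have x1G : (dl ^+ e1) ^+ G = c^-1 by rewrite -exprM Efc; apply/eqP; rewrite (eq_prim_root_expr pd) EG1.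
have x2G : (dl ^+ e2) ^+ G = d^-1 by rewrite -exprM Efd; apply/eqP; rewrite (eq_prim_root_expr pd) EG2.
have nz : forall (x : K) n, (0 < n)%N -> x ^+ n = 1 -> x != 0.
  move=> x n n0 Hx; apply/eqP => x0; move: Hx; rewrite x0 expr0n.
  by case: n n0 => // n _ /= /eqP; rewrite eq_sym oner_eq0.
have a0 := nz _ _ q10 Ha; have c0 := nz _ _ q10 Hc.
have b0 := nz _ _ q20 Hb; have d0 := nz _ _ q20 Hd.
have m1 : (-1 : K) = 1.
  apply/eqP; rewrite eq_sym -addr_eq0; apply/eqP.
  by move: (pcharf0 h); rewrite -[2%N]/(1 + 1)%N natrD.
have pm : forall x : K, 1 + x = x - 1 by move=> x; rewrite m1 addrC.
rewrite !pm in rel.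
have c1' : c - 1 != 0 by rewrite subr_eq0.
have b1' : b - 1 != 0 by rewrite subr_eq0.
have ac' : a - c != 0 by rewrite subr_eq0.
set N := (c - 1) * (a - c) * (b - 1).
have N0 : N != 0 by rewrite !mulf_neq0.
exists (((a - c) / N)%:P + ((c - 1) * a * b / N) *: 'X^F + ((1 - a) * c * d / N) *: 'X^G).
split; last by apply: (leq_ltn_trans (nmon3 _ _ _ _ _)).
have ev : forall x : K, (((a - c) / N)%:P + ((c - 1) * a * b / N) *: 'X^F
   + ((1 - a) * c * d / N) *: 'X^G).[x] = (a - c) / N + (c - 1) * a * b / N * x ^+ F
   + (1 - a) * c * d / N * x ^+ G.
  by move=> x; rewrite !hornerE.
rewrite !ev chinese11 -/e1 -/e2 exprD !exprMn x1F x2F x1G x2G !expr1n.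
split.
- have -> : (a - c) / N + (c - 1) * a * b / N * b^-1 + (1 - a) * c * d / N * d^-1 = 0.
    by field; rewrite N0 b0 d0.
  by [].
- have -> : (a - c) / N + (c - 1) * a * b / N * a^-1 + (1 - a) * c * d / N * c^-1
     = ((b - 1) * (c - 1) - (d - 1) * (a - 1)) / N by field; rewrite N0 a0 c0.
  by rewrite rel subrr mul0r.
- have -> : (a - c) / N + (c - 1) * a * b / N * (a^-1 * b^-1)
     + (1 - a) * c * d / N * (c^-1 * d^-1) = 0 by field; rewrite N0 a0 b0 c0 d0.
  by [].
- have -> : (a - c) / N + (c - 1) * a * b / N * 1 + (1 - a) * c * d / N * 1
     = 1 + c * ((b - 1) * (c - 1) - (d - 1) * (a - 1)) / N.
    by rewrite /N; field; rewrite b1' ac' c1'.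
  by rewrite rel subrr mulr0 mul0r addr0.
Qed.

Lemma transfer_neq (K : finFieldType) (K' : fieldType) (h : (2%N \in [pchar K]))
  (h' : (2%N \in [pchar K'])) (e : K) (y : K') :
  (forall R, ev h R e = 0 -> ev h' R y = 0) ->
  forall R, ev h R e != 0 -> ev h' R y != 0.
Proof.
move=> tr R nz.
set N := (#|K|.-1)%N.
have cK : #|K| = N.+1 by rewrite /N prednK // (ltn_trans _ (finNzRing_gt1 K)).
have N0 : (0 < N)%N by rewrite -ltnS -cK finNzRing_gt1.
have eN : ev h R e ^+ N = 1.
  apply: (mulIf nz); rewrite mul1r -exprSr -cK; exact: expf_card.
have : ev h' (R ^+ N - 1) y = 0 by apply: tr; rewrite evB evX eN ev1 subrr.
rewrite evB evX ev1 => /eqP; rewrite subr_eq0; apply: contraTneq => ->.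
by rewrite expr0n; move: N0; rewrite lt0n => /negbTE ->; rewrite eq_sym oner_eq0.
Qed.

Lemma primz (F : fieldType) (g : F) (m : nat) (k : int) :
  m.-primitive_root g -> (g ^ k == 1) = (m%:Z %| k)%Z.
Proof.
move=> pg; case: k => k.
  by rewrite dvdzE /= -(prim_order_dvd pg).
rewrite dvdzE /= (prim_order_dvd pg).
by rewrite -[g ^ Negz k]/((g ^+ k.+1)^-1) invr_eq1.
Qed.

Lemma logn_pq p1 p2 a b : prime p1 -> prime p2 -> p1 != p2 ->
  logn p1 (p1 ^ a * p2 ^ b) = a /\ logn p2 (p1 ^ a * p2 ^ b) = b.
Proof.
move=> pp1 pp2 p12.
rewrite !lognM ?expn_gt0 ?prime_gt0 // !lognX !logn_prime // !eqxx.
by rewrite (negbTE p12) eq_sym (negbTE p12) !muln1 !muln0 addn0 add0n.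
Qed.

Lemma cop_pq p1 p2 a b : prime p1 -> prime p2 -> p1 != p2 -> coprime (p1 ^ a) (p2 ^ b).
Proof.
move=> pp1 pp2 p12; apply: coprimeXl; apply: coprimeXr.
by rewrite prime_coprime // dvdn_prime2.
Qed.

Lemma cop_ch1 q1 q2 r : coprime q1 q2 -> coprime q1 (chinese q1 q2 1 r).
Proof.
move=> c; rewrite coprime_sym -coprime_modl chinese_modl // coprime_modl.
exact: coprime1n.
Qed.

Lemma cop_ch2 q1 q2 r : coprime q1 q2 -> coprime q2 (chinese q1 q2 r 1).
Proof.
move=> c; rewrite coprime_sym -coprime_modl chinese_modr // coprime_modl.
exact: coprime1n.
Qed.

Lemma dvd_ch1 q1 q2 r : coprime q1 q2 -> (q1 %| chinese q1 q2 0 r)%N.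
Proof. by move=> c; rewrite /dvdn chinese_modl // mod0n. Qed.

Lemma dvd_ch2 q1 q2 r : coprime q1 q2 -> (q2 %| chinese q1 q2 r 0)%N.
Proof. by move=> c; rewrite /dvdn chinese_modr // mod0n. Qed.

Lemma le_aux b i w : (w <= i)%N -> (b <= i + (b - w))%N.
Proof. lia. Qed.

Lemma char2_m1 (K : fieldType) (h : (2%N \in [pchar K])) : (-1 : K) = 1.
Proof.
apply/eqP; rewrite eq_sym -addr_eq0; apply/eqP.
by move: (pcharf0 h); rewrite -[2%N]/(1 + 1)%N natrD.
Qed.

Lemma char2_nz (K : fieldType) (h : (2%N \in [pchar K])) (x : K) : x != 1 -> 1 + x^-1 != 0.
Proof.
move=> x1; apply/eqP => H; move: x1; rewrite -invr_eq1.
have -> : x^-1 = -1 by apply/eqP; rewrite -addr_eq0 addrC H.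
by rewrite char2_m1 // eqxx.
Qed.

Theorem theorem4 (p1 p2 b1 b2 t : nat) (F : finFieldType) (gamma : F)
  (i1 i2 j1 j2 : nat) (sig1 sig2 : int) :
  prime p1 -> prime p2 -> (2 < p1)%N -> (2 < p2)%N -> p1 != p2 ->
  (0 < b1)%N -> (0 < b2)%N ->
  is_ord2 (p1 ^ b1 * p2 ^ b2)%N t ->
  #|F| = (2 ^ t)%N ->
  (p1 ^ b1 * p2 ^ b2)%N.-primitive_root gamma ->
  good_wrt gamma p1 p2 (p1 ^ b1 * p2 ^ b2)%N ->
  coprimez sig1 (p1 ^ b1 * p2 ^ b2)%N ->
  coprimez sig2 (p1 ^ b1 * p2 ^ b2)%N ->
  collision gamma p1 p2 (p1 ^ b1 * p2 ^ b2)%N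
    ((p1 ^ i1 * p2 ^ i2)%N%:Z * sig1) ((p1 ^ j1 * p2 ^ j2)%N%:Z * sig2) ->
  good p1 p2 ((p1 ^ b1 * p2 ^ b2) %/ (p1 ^ minn i1 j1 * p2 ^ minn i2 j2))%N.
Proof.
move=> pp1 pp2 p1g p2g p12 b10 b20 ord2 cardF prim goodm cs1 cs2 coll.
have [lq1 lq2] := logn_pq b1 b2 pp1 pp2 p12.
have cQ := cop_pq b1 b2 pp1 pp2 p12.
have p10 : (0 < p1)%N by rewrite prime_gt0.
have p20 : (0 < p2)%N by rewrite prime_gt0.
set Q1 := (p1 ^ b1)%N in lq1 lq2 cQ prim coll goodm ord2 cs1 cs2 *.
set Q2 := (p2 ^ b2)%N in lq1 lq2 cQ prim coll goodm ord2 cs1 cs2 *.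
set m := (Q1 * Q2)%N in lq1 lq2 prim coll goodm ord2 cs1 cs2 *.
have hq1 : q1 p1 m = Q1 by rewrite /q1 lq1.
have hq2 : q2 p2 m = Q2 by rewrite /q2 lq2.
have hF : (2%N \in [pchar F]).
  by apply: (card_finPcharP cardF); case: ord2.
case: coll; rewrite /inE_set /s10 /s01 /s_sig hq1 hq2.
set s10n := chinese Q1 Q2 1 0; set s01n := chinese Q1 Q2 0 1.
set P1 := (p1 ^ i1 * p2 ^ i2)%N; set P2 := (p1 ^ j1 * p2 ^ j2)%N.
set u := P1%:Z * sig1; set v := P2%:Z * sig2.
move=> /andP [nu1 nu2] /andP [nv1 nv2] rhoE uv.
have Q10 : (0 < Q1)%N by rewrite expn_gt0 p10.
have Q20 : (0 < Q2)%N by rewrite expn_gt0 p20.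
have m0 : (0 < m)%N by rewrite muln_gt0 Q10.
have Q1m : (Q1 %| m)%N by apply: dvdn_mulr.
have Q2m : (Q2 %| m)%N by apply: dvdn_mull.
have lt_i1 : (i1 < b1)%N.
  rewrite ltnNge; apply/negP => le; move: nu1; apply/negP; rewrite negbK.
  by rewrite /u dvdz_mulr // dvdzE /= dvdn_mulr // dvdn_exp2l.
have lt_i2 : (i2 < b2)%N.
  rewrite ltnNge; apply/negP => le; move: nu2; apply/negP; rewrite negbK.
  by rewrite /u dvdz_mulr // dvdzE /= dvdn_mull // dvdn_exp2l.
have lt_j1 : (j1 < b1)%N.
  rewrite ltnNge; apply/negP => le; move: nv1; apply/negP; rewrite negbK.
  by rewrite /v dvdz_mulr // dvdzE /= dvdn_mulr // dvdn_exp2l.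
have lt_j2 : (j2 < b2)%N.
  rewrite ltnNge; apply/negP => le; move: nv2; apply/negP; rewrite negbK.
  by rewrite /v dvdz_mulr // dvdzE /= dvdn_mull // dvdn_exp2l.
set w1 := minn i1 j1; set w2 := minn i2 j2.
have w1i : (w1 <= i1)%N by rewrite geq_minl.
have w1j : (w1 <= j1)%N by rewrite geq_minr.
have w2i : (w2 <= i2)%N by rewrite geq_minl.
have w2j : (w2 <= j2)%N by rewrite geq_minr.
set Q1' := (p1 ^ (b1 - w1))%N; set Q2' := (p2 ^ (b2 - w2))%N.
set W := (p1 ^ w1 * p2 ^ w2)%N.
have W0 : (0 < W)%N by rewrite muln_gt0 !expn_gt0 p10 p20.
have Em : m = (Q1' * Q2' * W)%N.
  rewrite /m /Q1 /Q2 /Q1' /Q2' /W -(subnK (ltnW (leq_ltn_trans w1i lt_i1))).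
  rewrite -(subnK (ltnW (leq_ltn_trans w2i lt_i2))) !expnD.
  rewrite !addnK. by rewrite mulnACA.
have Em1 : (m %/ W)%N = (Q1' * Q2')%N by rewrite Em mulnK.
rewrite Em1.
have g0 : gamma != 0 by rewrite (prim_root_eq0 prim) -lt0n.
have neq1 : forall (Q s : nat) (w : int), (Q %| m)%N -> coprime Q s ->
    ~~ (Q%:Z %| w)%Z -> gamma ^ (s%:Z * w) != 1.
  move=> Q s w Qm cs nw; rewrite (primz _ prim); apply/negP => H.
  have : (Q%:Z %| s%:Z * w)%Z by apply: dvdz_trans H; rewrite dvdzE /=.
  by rewrite Gauss_dvdzr ?coprimezE //; apply/negP.
have pow1 : forall (s P Qp : nat) (sg : int), (m %| s * P * Qp)%N ->
    (gamma ^ (s%:Z * (P%:Z * sg)))^-1 ^+ Qp = 1.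
  move=> s P Qp sg H; rewrite exprVn.
  rewrite -[_ ^+ Qp]/(_ ^ (Qp%:Z)) exprz_exp.
  have -> : s%:Z * (P%:Z * sg) * Qp%:Z = (s * P * Qp)%N%:Z * sg.
    by rewrite !PoszM; ring.
  by apply/eqP; rewrite invr_eq1 (primz _ prim) dvdz_mulr // dvdzE /=.
set Xu := gamma ^ (s10n%:Z * u); set Yu := gamma ^ (s01n%:Z * u).
set Xv := gamma ^ (s10n%:Z * v); set Yv := gamma ^ (s01n%:Z * v).
have Xu1 : Xu != 1 by exact: (neq1 Q1 s10n u Q1m (cop_ch1 0 cQ) nu1).
have Yu1 : Yu != 1 by exact: (neq1 Q2 s01n u Q2m (cop_ch2 0 cQ) nu2).
have Xv1 : Xv != 1 by exact: (neq1 Q1 s10n v Q1m (cop_ch1 0 cQ) nv1).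
have dQ1 : forall i k, (w1 <= i)%N -> (Q1 %| p1 ^ i * p2 ^ k * Q1')%N.
  move=> i k le; rewrite mulnAC dvdn_mulr // /Q1 /Q1' -expnD dvdn_exp2l //; exact: le_aux.
have dQ2 : forall i k, (w2 <= k)%N -> (Q2 %| p1 ^ i * p2 ^ k * Q2')%N.
  move=> i k le; rewrite -mulnA dvdn_mull // /Q2 /Q2' -expnD dvdn_exp2l //; exact: le_aux.
have Au : Xu^-1 ^+ Q1' = 1.
  by apply: pow1; rewrite /m mulnC -mulnA dvdn_mul ?dvd_ch2 ?dQ1.
have Bu : Yu^-1 ^+ Q2' = 1.
  by apply: pow1; rewrite /m -mulnA dvdn_mul ?dvd_ch1 ?dQ2.
have Cv : Xv^-1 ^+ Q1' = 1.
  by apply: pow1; rewrite /m mulnC -mulnA dvdn_mul ?dvd_ch2 ?dQ1.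
have Dv : Yv^-1 ^+ Q2' = 1.
  by apply: pow1; rewrite /m -mulnA dvdn_mul ?dvd_ch1 ?dQ2.
have nzA := char2_nz hF Xu1; have nzC := char2_nz hF Xv1.
have rel : (1 + Yu^-1) * (1 + Xv^-1) = (1 + Yv^-1) * (1 + Xu^-1).
  by apply/eqP; rewrite -(eqr_div _ _ nzA nzC); apply/eqP; exact: rhoE.
have AC : Xu^-1 != Xv^-1.
  apply/negP => /eqP EAC.
  have EBD : Yu^-1 = Yv^-1.
    by move: rel; rewrite EAC => /(mulIf nzC) /addrI.
  have EX := invr_inj EAC; have EY := invr_inj EBD.
  have h1 : (m%:Z %| s10n%:Z * (u - v))%Z.
    rewrite -(primz _ prim) mulrBr expfzDr // -invr_expz -/Xu -/Xv EX mulfV //.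
    exact: expfz_neq0.
  have h2 : (m%:Z %| s01n%:Z * (u - v))%Z.
    rewrite -(primz _ prim) mulrBr expfzDr // -invr_expz -/Yu -/Yv EY mulfV //.
    exact: expfz_neq0.
  have := rpredD h1 h2; rewrite -mulrDl -PoszD -chinese11 Gauss_dvdzr; last first.
    by rewrite coprimezE /= coprimeMl cop_ch1 // cop_ch2.
  by rewrite -eqz_mod_dvd (negbTE uv).
have dQm : (Q1' * Q2' %| m)%N by rewrite Em dvdn_mulr.
have pe := dvdn_prim_root prim dQm.
set e := gamma ^+ (m %/ (Q1' * Q2')) in pe.
have M1 : forall x : F, x ^+ Q1' = 1 -> x ^+ (Q1' * Q2') = 1.
  by move=> x H; rewrite exprM H expr1n.
have M2 : forall x : F, x ^+ Q2' = 1 -> x ^+ (Q1' * Q2') = 1.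
  by move=> x H; rewrite mulnC exprM H expr1n.
have [al Eal] := prim_rootP pe (M1 _ Au).
have [be Ebe] := prim_rootP pe (M2 _ Bu).
have [ga Ega] := prim_rootP pe (M1 _ Cv).
have [de Ede] := prim_rootP pe (M2 _ Dv).
move=> t1 ord1 K' cardK' dl pdl.
have hK : (2%N \in [pchar K']) by apply: (card_finPcharP cardK'); case: ord1.
have [y tr] := transfer hF hK (prim_expr_order pe) pdl.
have trn := transfer_neq tr.
have teq : forall k n (x : F), x = e ^+ k -> x ^+ n = 1 -> (y ^+ k) ^+ n = 1.
  move=> k n x Ex Hx; apply/eqP; rewrite -subr_eq0 -exprM; apply/eqP.
  have := tr ('X^(k * n) - 1); rewrite !evB !evXn !ev1 exprM -Ex Hx subrr.
  by apply.
have tneq : forall k1 k2 (x1 x2 : F), x1 = e ^+ k1 -> x2 = e ^+ k2 -> x1 != x2 ->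
    y ^+ k1 != y ^+ k2.
  move=> k1 k2 x1 x2 E1 E2 H.
  have := trn ('X^k1 - 'X^k2); rewrite !evB !evXn -E1 -E2 !subr_eq0; apply; exact: H.
have trel : (1 + y ^+ be) * (1 + y ^+ ga) = (1 + y ^+ de) * (1 + y ^+ al).
  have rel' : (Yu^-1 + 1) * (Xv^-1 + 1) = (Yv^-1 + 1) * (Xu^-1 + 1).
    by rewrite !(addrC _ 1).
  have := tr (('X^be + 1) * ('X^ga + 1) - ('X^de + 1) * ('X^al + 1)).
  rewrite !evB !evM !evD !evXn !ev1 -Eal -Ebe -Ega -Ede rel' subrr => /(_ erefl) /eqP.
  by rewrite subr_eq0 => /eqP H; rewrite !(addrC 1) H.
have [lq1' lq2'] := logn_pq (b1 - w1) (b2 - w2) pp1 pp2 p12.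
rewrite /good_wrt /decoding_poly /s01 /s10 /s11 /s_sig /q1 /q2 lq1' lq2'.
apply: (construct hK (a := y ^+ al) (b := y ^+ be) (c := y ^+ ga) (d := y ^+ de)).
- by rewrite expn_gt0 p10.
- by rewrite expn_gt0 p20.
- exact: cop_pq.
- exact: pdl.
- exact: (teq _ _ _ Eal Au).
- exact: (teq _ _ _ Ega Cv).
- exact: (teq _ _ _ Ebe Bu).
- exact: (teq _ _ _ Ede Dv).
- rewrite -(expr0 y); apply: (tneq _ _ _ _ Eal (esym (expr0 e))).
  by rewrite invr_eq1.
- rewrite -(expr0 y); apply: (tneq _ _ _ _ Ebe (esym (expr0 e))).
  by rewrite invr_eq1.
- rewrite -(expr0 y); apply: (tneq _ _ _ _ Ega (esym (expr0 e))).
  by rewrite invr_eq1.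
- exact: (tneq _ _ _ _ Eal Ega AC).
- exact: trel.
Qed.
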